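(* Let $\mathcal G=(G,f,h)$ be a network dynamical system of size $N$ with maximum out-degree $\Delta(G)$, satisfying Assumptions 1 and 2. Suppose that for each $i\in[N]$ there are functions $\psi_i^1,\dots,\psi_i^{s_i}:\mathbb R^N\to\mathbb R$ and nonzero coefficients $c_{i,1},\dots,c_{i,s_i}\in\mathbb R$ such that every trajectory of the system satisfies $x_i(t+1)=\sum_{l=1}^{s_i}c_{i,l}\psi_i^l(x(t))$ for all $t$; let $s_{\max}=\max_i s_i$. For each $q\in[N]$ fix a $q$-pinching initial condition with trajectory $x^q(t)$, and for each $i$ let $\Psi_i\in\mathbb R^{Ns_{\max}\times s_i}$ be the matrix whose row indexed by the pair $(q,t)$, $q\in[N]$, $t\in\{0,\dots,s_{\max}-1\}$, is $(\psi_i^1(x^q(t)),\dots,\psi_i^{s_i}(x^q(t)))$; assume $\operatorname{rank}\Psi_i=s_i$ for all $i$. Let $\phi_q\in\mathbb R^{P\times N}$, $q\in[N]$, satisfy $\delta_{2(\Delta(G)+1)^{s_{\max}}}(\phi_q)<\sqrt2-1$, and let $y^q(t)=\phi_q x^q(t)$ for $t=1,\dots,s_{\max}$. Then: (a) for every $q\in[N]$ and $t\in\{1,\dots,s_{\max}\}$, the problem $\min_{\tilde x}\|\tilde x\|_1$ subject to $\phi_q\tilde x=y^q(t)$ has the unique solution $x^q(t)$; (b) $\operatorname{supp}(x^q(1))\setminus\{q\}=L_1(q)$ for every $q$, so the adjacency matrix is uniquely determined; (c) for each $i\in[N]$, letting $b_i\in\mathbb R^{Ns_{\max}}$ be the vector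 whose entry indexed by $(q,t)$ (same ordering as the rows of $\Psi_i$) is $x_i^q(t+1)$, the linear system $\Psi_i c=b_i$ has the unique solution $c=(c_{i,1},\dots,c_{i,s_i})^T$, and it equals $\Psi_i^\dagger b_i=(\Psi_i^T\Psi_i)^{-1}\Psi_i^Tb_i$.
   Context: Let $G$ be a directed graph on vertex set $[N]=\{1,\dots,N\}$ without self-loops, with adjacency matrix $A\in\{0,1\}^{N\times N}$, where $A_{ij}=1$ if and only if $i$ receives an edge (input) from $j$; in particular $A_{ii}=0$. The out-degree of $q\in[N]$ is $d_q=\#\{i: A_{iq}=1\}$, the maximum out-degree is $\Delta(G)=\max_{q}d_q$, and the first-level set of $q$ is $L_1(q)=\{i\in[N]: A_{iq}=1\}$. The network dynamical system $\mathcal G=(G,f,h)$ is the discrete-time system $x_i(t+1)=f_i(x_i(t))+\sum_{j=1}^N A_{ij}h_{ij}(x_i(t),x_j(t))$ for $i\in[N]$, $t=0,1,2,\dots$, where $f_i:\mathbb R\to\mathbb R$ and $h_{ij}:\mathbb R\times\mathbb R\to\mathbb R$; the state vector is $x(t)=(x_1(t),\dots,x_N(t))^T$. Assumption 1: $f_i(0)=0$ for all $i\in[N]$. Assumption 2: there is $\delta>0$ such that for all $i,j\in[N]$, $h_{ij}(0,0)=0$ and $h_{ij}(0,v)\neq 0$ for every $v$ with $0<|v|<\delta$. For $q\in[N]$, a $q$-pinching initial condition is $x^q(0)$ with $x^q_i(0)=\epsilon_q\delta_{iq}$ (Kronecker delta), where $0<|\epsilon_q|<\delta$; $x^q(t)$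 denotes the resulting trajectory. For $x\in\mathbb R^N$, $\operatorname{supp}(x)=\{i: x_i\neq0\}$ and $\|x\|_0=\#\operatorname{supp}(x)$; $x$ is $s$-sparse if $\|x\|_0\le s$. The restricted isometry constant $\delta_s(\phi)$ of $\phi\in\mathbb R^{P\times N}$ is the smallest number such that $(1-\delta_s(\phi))\|x\|_2^2\le\|\phi x\|_2^2\le(1+\delta_s(\phi))\|x\|_2^2$ for all $s$-sparse $x\in\mathbb R^N$. $\Psi^\dagger$ denotes the Moore–Penrose pseudoinverse. *)

(* Defs.v *)
From HB Require Import structures.
From mathcomp Require Import all_boot all_order all_algebra.
From mathcomp Require Import reals.
Set Implicit Arguments. Unset Strict Implicit. Unset Printing Implicit Defensive.
Import Order.TTheory GRing.Theory Num.Theory.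
Local Open Scope ring_scope.

Section NDS.
Variables (R : realType) (N : nat).

(* Adjacency: A i j = true iff i receives an edge from j. *)
Definition outdeg (A : 'I_N -> 'I_N -> bool) (q : 'I_N) : nat :=
  #|[set i | A i q]|.
Definition maxOutdeg (A : 'I_N -> 'I_N -> bool) : nat :=
  (\max_(q < N) outdeg A q)%N.
Definition L1 (A : 'I_N -> 'I_N -> bool) (q : 'I_N) : {set 'I_N} :=
  [set i | A i q].

Definition nds_step (A : 'I_N -> 'I_N -> bool) (f : 'I_N -> R -> R)
    (h : 'I_N -> 'I_N -> R -> R -> R) (x : 'cV[R]_N) : 'cV[R]_N :=
  \col_i (f i (x i 0) + \sum_(j < N | A i j) h i j (x i 0) (x j 0)).

Definition traj A f h (x0 : 'cV[R]_N) (t : nat) : 'cV[R]_N :=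
  iter t (nds_step A f h) x0.

Definition pinch (q : 'I_N) (eps : R) : 'cV[R]_N :=
  \col_i (if i == q then eps else 0).

Definition supp (x : 'cV[R]_N) : {set 'I_N} := [set i | x i 0 != 0].
Definition l0norm (x : 'cV[R]_N) : nat := #|supp x|.
Definition l1norm (x : 'cV[R]_N) : R := \sum_i `|x i 0|.
Definition sqnorm (m : nat) (x : 'cV[R]_m) : R := \sum_i (x i 0) ^+ 2.

Definition RIP_holds (P : nat) (phi : 'M[R]_(P, N)) (s : nat) (d : R) : Prop :=
  forall x : 'cV[R]_N, (l0norm x <= s)%N ->
    (1 - d) * sqnorm x <= sqnorm (phi *m x) /\
    sqnorm (phi *m x) <= (1 + d) * sqnorm x.

Definition is_RIC (P : nat) (phi : 'M[R]_(P, N)) (s : nat) (d : R) : Prop :=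
  RIP_holds phi s d /\ forall d', RIP_holds phi s d' -> d <= d'.

End NDS.

Definition is_MP_pinv (R : realType) (m n : nat) (A : 'M[R]_(m, n))
    (X : 'M[R]_(n, m)) : Prop :=
  [/\ A *m X *m A = A, X *m A *m X = X,
      (A *m X)^T = A *m X & (X *m A)^T = X *m A].

(* row index (q,t) of an (N * smax)-row matrix, in lexicographic order *)
Definition pair_of (N S : nat) (k : 'I_(N * S)) : 'I_N * 'I_S :=
  enum_val (cast_ord (esym (mxvec_cast N S)) k).

(* Main.v *)
Require Import Defs.
From HB Require Import structures.
From mathcomp Require Import all_boot all_order all_algebra.
From mathcomp Require Import reals.
From mathcomp Require Import ring lra zify.
Set Implicit Arguments. Unset Strict Implicit. Unset Printing Implicit Defensive.
Import Order.TTheory GRing.Theory Num.Theory.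
Local Open Scope ring_scope.

Section CS.
Variable R : realType.

Definition dotv m (x y : 'cV[R]_m) : R := \sum_i x i 0 * y i 0.
Definition nrm m (x : 'cV[R]_m) : R := Num.sqrt (sqnorm x).

Lemma dot_polar m (x y : 'cV[R]_m) :
  sqnorm (x + y) - sqnorm (x - y) = 4 * dotv x y.
Proof.
rewrite /sqnorm /dotv -sumrB mulr_sumr; apply: eq_bigr => i _; rewrite !mxE; ring.
Qed.

Lemma sqnorm_ge0 m (x : 'cV[R]_m) : 0 <= sqnorm x.
Proof. by apply: sumr_ge0 => i _; rewrite sqr_ge0. Qed.

Lemma sqnorm_eq0 m (x : 'cV[R]_m) : sqnorm x = 0 -> x = 0.
Proof.
move=> /eqP; rewrite psumr_eq0; last by move=> i _; rewrite sqr_ge0.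
move=> /allP H; apply/matrixP => i j; rewrite ord1 mxE.
by have := H i (mem_index_enum i); rewrite sqrf_eq0 => /eqP.
Qed.

Lemma dotv0r m (x : 'cV[R]_m) : dotv x 0 = 0.
Proof. by rewrite /dotv big1 // => i _; rewrite mxE mulr0. Qed.
Lemma dotv0l m (x : 'cV[R]_m) : dotv 0 x = 0.
Proof. by rewrite /dotv big1 // => i _; rewrite mxE mul0r. Qed.
Lemma dotvZl m a (x y : 'cV[R]_m) : dotv (a *: x) y = a * dotv x y.
Proof. by rewrite /dotv mulr_sumr; apply: eq_bigr => i _; rewrite mxE mulrA. Qed.
Lemma dotvNr m (x y : 'cV[R]_m) : dotv x (- y) = - dotv x y.
Proof. by rewrite /dotv -sumrN; apply: eq_bigr => i _; rewrite mxE mulrN. Qed.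

Lemma nrm_sq m (x : 'cV[R]_m) : nrm x ^+ 2 = sqnorm x.
Proof. by rewrite /nrm sqr_sqrtr // sqnorm_ge0. Qed.
Lemma nrm_ge0 m (x : 'cV[R]_m) : 0 <= nrm x.
Proof. exact: sqrtr_ge0. Qed.

Variable N : nat.

Lemma supp_sub (x : 'cV[R]_N) (S : {set 'I_N}) :
  supp x \subset S -> forall i, i \notin S -> x i 0 = 0.
Proof.
move=> /subsetP H i iS; apply/eqP; apply: contraNT iS => xi.
by apply: H; rewrite inE.
Qed.

Lemma rip_dot P (phi : 'M[R]_(P, N)) s d (S1 S2 : {set 'I_N}) (x y : 'cV[R]_N) :
  RIP_holds phi s d -> [disjoint S1 & S2] -> (#|S1| + #|S2| <= s)%N ->
  supp x \subset S1 -> supp y \subset S2 ->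
  `|dotv (phi *m x) (phi *m y)| <= d * nrm x * nrm y.
Proof.
move=> Hrip dis Hs sx sy.
have xy0 : forall i, x i 0 * y i 0 = 0.
  move=> i; case: (boolP (i \in S1)) => iS1.
    have iS2 : i \notin S2 by rewrite (disjointFr dis iS1).
    by rewrite (supp_sub sy iS2) mulr0.
  by rewrite (supp_sub sx iS1) mul0r.
have key : forall a (z : 'cV[R]_N), supp z \subset S2 -> (forall i, x i 0 * z i 0 = 0) ->
   4 * (a * dotv (phi *m x) (phi *m z)) <= 2 * d * (a ^+ 2 * sqnorm x + sqnorm z).
  move=> a z sz xz0.
  have l0 : forall b : R, (l0norm (a *: x + b *: z) <= s)%N.
    move=> b; apply: leq_trans Hs; apply: leq_trans (leq_card_setU S1 S2).
    apply: subset_leq_card; apply/subsetP => i; rewrite inE !mxE inE => H.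
    case: (boolP (i \in S1)) => //= iS1; rewrite (supp_sub sx iS1) mulr0 add0r in H.
    apply: contraNT H => iS2; by rewrite (supp_sub sz iS2) mulr0.
  have sq : forall b : R, b ^+ 2 = 1 -> sqnorm (a *: x + b *: z) = a ^+ 2 * sqnorm x + sqnorm z.
    move=> b b2; rewrite /sqnorm mulr_sumr -big_split; apply: eq_bigr => i _; rewrite !mxE.
    have := xz0 i; move: (x i 0) (z i 0) => u v uv.
    apply/eqP; rewrite -subr_eq0.
    have -> : (a * u + b * v) ^+ 2 - (a ^+ 2 * u ^+ 2 + v ^+ 2) =
       2 * a * b * (u * v) + (b ^+ 2 - 1) * v ^+ 2 by ring.
    by rewrite uv b2 subrr !mul0r mulr0 addr0.
  have [_ H1] := Hrip _ (l0 1).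
  have [H2 _] := Hrip _ (l0 (-1)).
  rewrite sq in H1; last by rewrite expr1n.
  rewrite sq in H2; last by rewrite sqrrN expr1n.
  have e : 4 * (a * dotv (phi *m x) (phi *m z)) =
     sqnorm (phi *m (a *: x + 1 *: z)) - sqnorm (phi *m (a *: x + (-1) *: z)).
    rewrite !scaleN1r scale1r !mulmxDr mulmxN -scalemxAr dot_polar dotvZl.
    by [].

  rewrite e; lra.
have Ka : forall a, 0 < a -> 2 * a * `|dotv (phi *m x) (phi *m y)| <= d * (a ^+ 2 * sqnorm x + sqnorm y).
  move=> a a0; have k1 := key a y sy xy0.
  have k2 := key a (- y).
  have sny : supp (- y) \subset S2.
    apply/subsetP => i; rewrite inE mxE oppr_eq0 => H; move/subsetP: sy; apply; by rewrite inE.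
  have xny : forall i, x i 0 * (- y) i 0 = 0 by move=> i; rewrite mxE mulrN xy0 oppr0.
  move: (k2 sny xny); rewrite mulmxN dotvNr.
  have -> : sqnorm (- y) = sqnorm y by rewrite /sqnorm; apply: eq_bigr => i _; rewrite mxE sqrrN.
  case: (ler0P (dotv (phi *m x) (phi *m y))) => [D0|D0] k2'.
    nra.
  nra.
have nx0 := nrm_ge0 x; have ny0 := nrm_ge0 y.
case: (boolP (nrm x == 0)) => [/eqP nx|nx].
  have : sqnorm x = 0 by rewrite -nrm_sq nx expr0n.
  move/sqnorm_eq0 => x0; by rewrite nx x0 mulmx0 dotv0l normr0 mulr0 mul0r.
case: (boolP (nrm y == 0)) => [/eqP ny|ny].
  have : sqnorm y = 0 by rewrite -nrm_sq ny expr0n.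
  move/sqnorm_eq0 => y0; by rewrite ny y0 mulmx0 dotv0r normr0 mulr0.
have nxp : 0 < nrm x by rewrite lt_neqAle eq_sym nx.
have nyp : 0 < nrm y by rewrite lt_neqAle eq_sym ny.
have ax : (nrm y / nrm x) * nrm x = nrm y by rewrite mulfVK // lt0r_neq0.
have := Ka (nrm y / nrm x) (divr_gt0 nyp nxp).
rewrite -!nrm_sq.
have -> : (nrm y / nrm x) ^+ 2 * nrm x ^+ 2 = nrm y ^+ 2.
  by rewrite -exprMn ax.
move: (nrm y / nrm x) ax => a ax.
set D := `|_|.
move=> H.
have H1 : a * D <= d * nrm y ^+ 2 by lra.
have H2 : (a * nrm x) * D <= d * nrm y ^+ 2 * nrm x.
  nra.
rewrite ax in H2.
rewrite -(ler_pM2l nyp); nra.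
Qed.


Definition restr (S : {set 'I_N}) (x : 'cV[R]_N) : 'cV[R]_N :=
  \col_i (if i \in S then x i 0 else 0).

Lemma supp_restr (S : {set 'I_N}) (x : 'cV[R]_N) : supp (restr S x) \subset S.
Proof.
apply/subsetP => i; rewrite inE mxE; case: ifP => //; by rewrite eqxx.
Qed.

Lemma l0norm_restr (S : {set 'I_N}) (x : 'cV[R]_N) : (l0norm (restr S x) <= #|S|)%N.
Proof. exact/subset_leq_card/supp_restr. Qed.

Lemma sqnorm_restr (S : {set 'I_N}) (x : 'cV[R]_N) : sqnorm (restr S x) = \sum_(i in S) (x i 0) ^+ 2.
Proof.
rewrite /sqnorm [RHS]big_mkcond; apply: eq_bigr => i _; rewrite mxE.
by case: ifP => //; rewrite expr0n.
Qed.

Lemma sqnorm_restrU (S1 S2 : {set 'I_N}) (x : 'cV[R]_N) : [disjoint S1 & S2] ->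
  sqnorm (restr (S1 :|: S2) x) = sqnorm (restr S1 x) + sqnorm (restr S2 x).
Proof.
move=> dis; rewrite /sqnorm -big_split; apply: eq_bigr => i _; rewrite !mxE inE.
case: (boolP (i \in S1)) => iS1 /=.
  by rewrite (disjointFr dis iS1) expr0n addr0.
by case: ifP => _; rewrite ?expr0n add0r.
Qed.

Lemma dotv_sumr m I (r : seq I) (Pr : pred I) (x : 'cV[R]_m) (y : I -> 'cV[R]_m) :
  dotv x (\sum_(j <- r | Pr j) y j) = \sum_(j <- r | Pr j) dotv x (y j).
Proof.
rewrite /dotv; under eq_bigr do rewrite summxE mulr_sumr.
by rewrite exchange_big.
Qed.

Lemma dotvDl m (x y z : 'cV[R]_m) : dotv (x + y) z = dotv x z + dotv y z.
Proof. by rewrite /dotv -big_split; apply: eq_bigr => i _; rewrite mxE mulrDl. Qed.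

Lemma sqnorm_dotv m (x : 'cV[R]_m) : sqnorm x = dotv x x.
Proof. by rewrite /sqnorm /dotv; apply: eq_bigr => i _; rewrite expr2. Qed.

Lemma cs_sum (S : {set 'I_N}) (a : 'I_N -> R) :
  (\sum_(i in S) a i) ^+ 2 <= #|S|%:R * \sum_(i in S) a i ^+ 2.
Proof.
set A := \sum_(i in S) a i; set Q := \sum_(i in S) a i ^+ 2; set n := #|S|%:R.
have H : 0 <= \sum_(i in S) (n * a i - A) ^+ 2 by apply: sumr_ge0 => i _; exact: sqr_ge0.
have E : \sum_(i in S) (n * a i - A) ^+ 2 = n * (n * Q - A ^+ 2).
  have -> : \sum_(i in S) (n * a i - A) ^+ 2 =
     \sum_(i in S) (n ^+ 2 * a i ^+ 2 - (2 * n * A) * a i + A ^+ 2).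
    by apply: eq_bigr => i _; ring.
  rewrite big_split /= sumrB -!mulr_sumr sumr_const -/A -/Q.
  rewrite -mulr_natl -/n; ring.
rewrite E in H.
have n0 : 0 <= n by rewrite ler0n.
case: (boolP (n == 0)) => [/eqP n00|nn0].
  have S0 : S = set0 by apply/eqP; rewrite -cards_eq0 -(pnatr_eq0 R) -/n n00.
  by rewrite /A /Q S0 !big_set0 expr0n n00 mul0r.
have np : 0 < n by rewrite lt_neqAle eq_sym nn0.
rewrite -subr_ge0; rewrite pmulr_rge0 // in H.
Qed.

Lemma divK_eq (K m j : nat) : (0 < K)%N -> (m %/ K == j)%N = (j * K <= m < j.+1 * K)%N.
Proof.
move=> K0; rewrite eqn_leq leq_divRL // -ltnS ltn_divLR // andbC //.
Qed.

End CS.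

Section NSP.
Variable R : realType.
Variable N : nat.

Lemma le_sq (x y : R) : 0 <= y -> x ^+ 2 <= y ^+ 2 -> x <= y.
Proof. move=> y0 H; case: (lerP x y) => // yx; nra. Qed.

Lemma sq_le (x y : R) : 0 <= x -> x <= y -> x ^+ 2 <= y ^+ 2.
Proof. move=> x0 xy; rewrite !expr2; apply: ler_pM => //. Qed.

Lemma lemulr (z x y : R) : 0 <= z -> x <= y -> x * z <= y * z.
Proof. by move=> h1 h2; rewrite -subr_ge0 -mulrBl mulr_ge0 // subr_ge0. Qed.
Lemma lemull (z x y : R) : 0 <= z -> x <= y -> z * x <= z * y.
Proof. by move=> h1 h2; rewrite -subr_ge0 -mulrBr mulr_ge0 // subr_ge0. Qed.

Lemma nsp P (phi : 'M[R]_(P, N)) (K : nat) d (hv : 'cV[R]_N) (T : {set 'I_N}) :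
  (0 < K)%N -> RIP_holds phi (2 * K) d -> 0 <= d -> d < Num.sqrt 2 - 1 ->
  (#|T| <= K)%N -> phi *m hv = 0 -> hv != 0 ->
  \sum_(i in T) `|hv i 0| < \sum_(i in ~: T) `|hv i 0|.
Proof.
move=> K0 Hrip d0 d1 TK phih hn0.
pose a := fun i => `|hv i 0|.
have a0 : forall i, 0 <= a i by move=> i; exact: normr_ge0.
pose r := fun i j : 'I_N => a j <= a i.
have r_tot : total r by move=> i j; rewrite /r le_total.
have r_tr : transitive r by move=> y x z h1 h2; rewrite /r; exact: le_trans h2 h1.
pose sq := sort r (enum (~: T)).
have sq_uniq : uniq sq by rewrite sort_uniq enum_uniq.
have sq_mem : forall i, (i \in sq) = (i \in ~: T) by move=> i; rewrite mem_sort mem_enum.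
have sq_sorted : sorted r sq := sort_sorted r_tot _.
have sq_size : (size sq <= N)%N.
  by rewrite size_sort -cardE; apply: leq_trans (max_card _) _; rewrite card_ord.
pose pos := fun i => index i sq.
have pos_lt : forall i, i \in ~: T -> (pos i < size sq)%N by move=> i; rewrite -sq_mem index_mem.
have nth_pos : forall x0 i, i \in ~: T -> nth x0 sq (pos i) = i.
  by move=> x0 i; rewrite -sq_mem; exact: nth_index.
pose B := fun j : nat => [set i in ~: T | (pos i %/ K == j)%N].
have inB0 : forall i j, (i \in B j) = (i \in ~: T) && (pos i %/ K == j)%N.
  by move=> i j; rewrite /B inE.
have inB : forall i j, (i \in B j) = (i \in ~: T) && (j * K <= pos i < j.+1 * K)%N.
  by move=> i j; rewrite inB0 divK_eq.
have C1 : forall j, (#|B j| <= K)%N.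
  move=> j; rewrite cardE -(size_map pos) -(size_iota (j * K) K).
  apply: uniq_leq_size.
    rewrite map_inj_in_uniq ?enum_uniq //.
    move=> x y; rewrite !mem_enum !inB => /andP[xT _] /andP[yT _].
    by apply: (index_inj x); rewrite sq_mem.
  move=> p /mapP[i]; rewrite mem_enum inB => /andP[_ Hi] ->.
  rewrite mem_iota; move: Hi; rewrite mulSn; move: (j * K) => jK; lia.
have C2 : forall j i, i \in B j.+1 -> K%:R * a i <= \sum_(k in B j) a k.
  move=> j i; rewrite inB => /andP[iT Hi].
  have le_ai : forall k, k \in B j -> a i <= a k.
    move=> k; rewrite inB => /andP[kT Hk].
    have lt : (pos k < pos i)%N.
      case/andP: Hi => Hi1 _; case/andP: Hk => _ Hk2; exact: leq_trans Hk2 Hi1.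
    have := sorted_ltn_nth r_tr i sq_sorted (pos k) (pos i) (pos_lt k kT) (pos_lt i iT) lt.
    by rewrite /r !nth_pos.
  have cardB : (K <= #|B j|)%N.
    pose g := fun p : 'I_K => nth i sq (j * K + p).
    have g_lt : forall p : 'I_K, (j * K + p < size sq)%N.
      move=> p; apply: leq_trans (pos_lt i iT); case/andP: Hi => Hi1 _.
      apply: leq_trans Hi1; move: (ltn_ord p); rewrite mulSn; move: (j * K) => jK; lia.
    have g_inj : injective g.
      move=> p1 p2; rewrite /g => /eqP; rewrite nth_uniq ?g_lt // => /eqP H.
      by apply: val_inj; apply: (addnI H).
    have : [set g p | p : 'I_K] \subset B j.
      apply/subsetP => k /imsetP[p _ ->]; rewrite inB.
      have gT : g p \in ~: T by rewrite -sq_mem /g mem_nth.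
      rewrite gT /= /pos /g index_uniq ?g_lt //.
      move: (ltn_ord p); rewrite mulSn; move: (j * K) => jK; lia.
    by move/subset_leq_card; rewrite card_imset // card_ord.
  apply: le_trans (_ : \sum_(k in B j) a i <= _).
    rewrite sumr_const -mulr_natl.
    have : (K%:R <= #|B j|%:R :> R) by rewrite ler_nat.
    have := a0 i; nra.
  by apply: ler_sum => k kB; exact: le_ai.
have C3 : forall i, i \in ~: T -> (pos i %/ K < N)%N.
  move=> i iT; apply: leq_ltn_trans (leq_div _ _) _; exact: leq_trans (pos_lt i iT) sq_size.
have ind : forall i (F : R),
    \sum_(0 <= j < N) (if i \in B j then F else 0) = if i \in ~: T then F else 0.
  move=> i F; case: (boolP (i \in ~: T)) => iT.
    rewrite big_mkord (bigD1 (Ordinal (C3 i iT))) //= big1 ?addr0.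
      by rewrite inB0 iT eqxx.
    move=> j jn; rewrite inB0 iT /=; case: ifP => // /eqP H; exfalso.
    by move/eqP: jn; apply; apply: val_inj => /=.
  by rewrite big1_seq // => j _; rewrite inB0 (negbTE iT).
have sumB : forall F : 'I_N -> R,
    \sum_(i in ~: T) F i = \sum_(0 <= j < N) \sum_(i in B j) F i.
  move=> F; rewrite big_mkcond /=.
  under eq_bigr do rewrite -ind.
  rewrite exchange_big /=; apply: eq_bigr => j _; by rewrite [RHS]big_mkcond.
have N0 : (0 < N)%N.
  case: (posnP N) => [N0|//]; exfalso; move/negP: hn0; apply; apply/eqP/matrixP => i.
  by move: (ltn_ord i); rewrite {2}N0.
have BT : forall j, [disjoint T & B j].
  move=> j; apply/pred0P => i /=; rewrite inB0 in_setC; by case: (i \in T).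
have BB : forall j k, j != k -> [disjoint B j & B k].
  move=> j k jk; apply/pred0P => i /=; rewrite !inB0.
  case: (i \in ~: T) => //=; apply/negP => /andP[/eqP e1 /eqP e2].
  by move/eqP: jk; apply; rewrite -e1 -e2.
pose u := restr (T :|: B 0%N) hv.
have dec : hv = u + \sum_(1 <= j < N) restr (B j) hv.
  apply/matrixP => i k; rewrite ord1 !mxE summxE.
  have := ind i (hv i 0); rewrite big_ltn // => H.
  under eq_bigr do rewrite mxE.
  rewrite inE; case: (boolP (i \in T)) => iT /=.
    move: H; rewrite inB0 !in_setC iT /= add0r => ->; by rewrite addr0.
  by move: H; rewrite in_setC iT /= => ->.
have phiu : phi *m u = - \sum_(1 <= j < N) phi *m restr (B j) hv.
  have H := phih; rewrite [in LHS]dec mulmxDr mulmx_sumr in H.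
  by apply/eqP; rewrite -addr_eq0 H.
have ueq : u = restr T hv + restr (B 0%N) hv.
  apply/matrixP => i k; rewrite ord1 !mxE inE.
  case: (boolP (i \in T)) => iT /=.
    by rewrite inB0 in_setC iT /= addr0.
  by rewrite add0r.
pose nT := nrm (restr T hv); pose nB := nrm (restr (B 0%N) hv); pose nu := nrm u.
pose nj := fun j => nrm (restr (B j) hv).
have nT0 : 0 <= nT by exact: nrm_ge0.
have nB0 : 0 <= nB by exact: nrm_ge0.
have nu0 : 0 <= nu by exact: nrm_ge0.
have usq : nu ^+ 2 = nT ^+ 2 + nB ^+ 2 by rewrite !nrm_sq sqnorm_restrU.
have cT : forall j, (#|T| + #|B j| <= 2 * K)%N by move=> j; have := C1 j; lia.
have lu : (l0norm u <= 2 * K)%N.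
  apply: leq_trans (l0norm_restr _ _) _; apply: leq_trans (leq_card_setU _ _) _; exact: cT.
have [Hu _] := Hrip u lu.
set S := \sum_(1 <= j < N) nj j.
have HS : sqnorm (phi *m u) <= d * (nT + nB) * S.
  rewrite sqnorm_dotv {2}phiu dotvNr dotv_sumr -sumrN /S mulr_sumr.
  rewrite big_nat_cond [X in _ <= X]big_nat_cond; apply: ler_sum => j /andP[/andP[j1 _] _].
  apply: le_trans (ler_norm _) _; rewrite normrN ueq mulmxDr dotvDl.
  apply: le_trans (ler_normD _ _) _.
  have j0 : (0 != j)%N by rewrite neq_ltn j1.
  have h1 := rip_dot Hrip (BT j) (cT j) (supp_restr T hv) (supp_restr (B j) hv).
  have h2 := rip_dot Hrip (BB _ _ j0) (leq_trans (leq_add (C1 0%N) (C1 j)) _) (supp_restr _ hv) (supp_restr (B j) hv).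
  rewrite -/nT -/nB in h1 h2 *.
  have h2' : `|dotv (phi *m restr (B 0%N) hv) (phi *m restr (B j) hv)| <= d * nB * nrm (restr (B j) hv).
    apply: h2; lia.
  rewrite /nj; move: h1 h2'; set X1 := `|_|; set X2 := `|_|; move=> h1 h2'. nra.
have rK0 : 0 < Num.sqrt (K%:R : R) by rewrite sqrtr_gt0 ltr0n.
set rK := Num.sqrt (K%:R : R).
have rK2 : rK ^+ 2 = K%:R by rewrite sqr_sqrtr // ler0n.
have aK : forall i, a i ^+ 2 = hv i 0 ^+ 2 by move=> i; rewrite /a real_normK // num_real.
have C4 : forall j, rK * nj j.+1 <= \sum_(k in B j) a k.
  move=> j; apply: le_sq; first by apply: sumr_ge0.
  rewrite exprMn rK2 /nj nrm_sq sqnorm_restr.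
  set n1 := \sum_(k in B j) a k.
  have each : forall i, i \in B j.+1 -> K%:R ^+ 2 * hv i 0 ^+ 2 <= n1 ^+ 2.
    move=> i iB; rewrite -aK -exprMn; have h := C2 j i iB.
    have h0 : 0 <= K%:R * a i by rewrite mulr_ge0 ?ler0n.
    exact: sq_le.
  have : K%:R ^+ 2 * \sum_(i in B j.+1) hv i 0 ^+ 2 <= K%:R * n1 ^+ 2.
    rewrite mulr_sumr; apply: le_trans (ler_sum _ each) _.
    rewrite sumr_const -(mulr_natl (n1 ^+ 2)); apply: lemulr; first exact: sqr_ge0.
    by rewrite ler_nat.
  have Kp : 0 < K%:R :> R by rewrite ltr0n.
  move=> H; rewrite -(ler_pM2l Kp) mulrA -expr2; exact: H.
have HrS : rK * S <= \sum_(i in ~: T) a i.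
  rewrite sumB /S mulr_sumr.
  rewrite (big_cat_nat (leq0n N.-1) (leq_pred N)) /=.
  apply: le_trans (_ : \sum_(1 <= j < N) \sum_(k in B j.-1) a k <= _).
    rewrite big_nat_cond [X in _ <= X]big_nat_cond; apply: ler_sum => j /andP[/andP[j1 _] _].
    by case: j j1 => // j _; exact: C4.
  rewrite -{1}(prednK N0) big_add1 /= -[X in X <= _]addr0; apply: lerD => //.
  apply: sumr_ge0 => j _; apply: sumr_ge0 => k _; exact: a0.
have HT : \sum_(i in T) a i <= rK * nT.
  apply: le_sq; first by rewrite mulr_ge0 // ltW.
  rewrite exprMn rK2 /nT nrm_sq sqnorm_restr.
  apply: le_trans (cs_sum T a) _.
  under [X in _ <= _ * X]eq_bigr do rewrite -aK.
  apply: lemulr; first by apply: sumr_ge0 => i _; exact: sqr_ge0.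
  by rewrite ler_nat.
have nTu : nT <= nu by apply: le_sq => //; rewrite usq lerDl sqr_ge0.
have s2 : Num.sqrt (2 : R) ^+ 2 = 2 by rewrite sqr_sqrtr // ler0n.
have s20 : 0 <= Num.sqrt (2 : R) by exact: sqrtr_ge0.
set s := Num.sqrt (2 : R).
have nTB : nT + nB <= s * nu.
  apply: le_sq; first by rewrite mulr_ge0.
  rewrite exprMn s2 usq; have := sqr_ge0 (nT - nB); nra.
have Hu' : (1 - d) * nu ^+ 2 <= d * (nT + nB) * S by rewrite nrm_sq; exact: le_trans Hu HS.
have S0 : 0 <= S by apply: sumr_ge0 => j _; exact: nrm_ge0.
have kk1 : (1 - d) * nu ^+ 2 <= s * d * nu * S.
  apply: le_trans Hu' _; rewrite (mulrC s d) -!mulrA; rewrite -subr_ge0 -mulrBr mulr_ge0 // subr_ge0.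
  rewrite mulrA -subr_ge0 -mulrBl mulr_ge0 // subr_ge0; exact: nTB.
have ds : s * d < 1 - d.
  have : d * (s + 1) < (s - 1) * (s + 1) by rewrite ltr_pM2r // ltr_wpDl.
  have -> : (s - 1) * (s + 1) = s ^+ 2 - 1 by ring.
  rewrite s2; lra.
have d1' : 0 < 1 - d by apply: le_lt_trans ds; rewrite mulr_ge0 // sqrtr_ge0.
have key2 : (1 - d) * nu <= s * d * S.
  have sdS : 0 <= s * d * S by rewrite !mulr_ge0.
  move: kk1; case: (ltrP 0 nu) => [nup|nule] H.
    rewrite -(ler_pM2r nup); move: H; rewrite !expr2; lra.
  have -> : nu = 0 by apply/le_anti; rewrite nule nu0.
  by rewrite mulr0.
set A := \sum_(i in T) a i; set L := \sum_(i in ~: T) a i.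
have A0 : 0 <= A by apply: sumr_ge0.
have L0 : 0 <= L by apply: sumr_ge0.
have key3 : (1 - d) * A <= s * d * L.
  apply: le_trans (_ : (1 - d) * (rK * nu) <= _).
    apply: lemull; first exact: ltW.
    apply: le_trans HT _; apply: lemull => //; exact: ltW.
  apply: le_trans (_ : rK * (s * d * S) <= _).
    rewrite mulrCA; apply: lemull => //; exact: ltW.
  rewrite mulrCA; apply: lemull; first by rewrite mulr_ge0.
  exact: HrS.
case: (boolP (L == 0)) => [/eqP L00|Ln0].
  exfalso; move/negP: hn0; apply; apply/eqP/matrixP => i k; rewrite ord1 mxE.
  have A00 : A = 0 by move: key3; rewrite L00 mulr0 => H; apply/le_anti; rewrite A0 andbT; nra.
  case: (boolP (i \in T)) => iT.
    move/eqP: A00; rewrite /A psumr_eq0 => [/allP H|j _]; last exact: a0.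
    by have := H i (mem_index_enum i); rewrite iT /= /a normr_eq0 => /eqP.
  move/eqP: L00; rewrite /L psumr_eq0 => [/allP H|j _]; last exact: a0.
  by have := H i (mem_index_enum i); rewrite in_setC iT /= /a normr_eq0 => /eqP.
have Lp : 0 < L by rewrite lt_neqAle eq_sym Ln0.
have : s * d * L < (1 - d) * L by rewrite ltr_pM2r.
move=> H; nra.
Qed.
End NSP.

Section Graph.
Variable R : realType.
Variable N : nat.

Lemma card_bigcup_le (S : {set 'I_N}) (F : 'I_N -> {set 'I_N}) :
  (#|\bigcup_(j in S) F j| <= \sum_(j in S) #|F j|)%N.
Proof.
apply: (big_rec2 (fun (X : {set 'I_N}) (n : nat) => is_true (#|X| <= n)%N)) => [|j X n _ H]; first by rewrite cards0.
apply: leq_trans (leq_card_setU _ _) _; exact: leq_add.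
Qed.

Lemma supp_step (A : 'I_N -> 'I_N -> bool) (f : 'I_N -> R -> R)
    (h : 'I_N -> 'I_N -> R -> R -> R) (x : 'cV[R]_N) :
  (forall i, f i 0 = 0) -> (forall i j, h i j 0 0 = 0) ->
  (#|supp (nds_step A f h x)| <= #|supp x| * (maxOutdeg A).+1)%N.
Proof.
move=> Hf Hh.
have sub : supp (nds_step A f h x) \subset supp x :|: \bigcup_(j in supp x) L1 A j.
  apply/subsetP => i; rewrite !inE mxE; apply: contraR; rewrite negb_or => /andP[xi nb].
  move: xi; rewrite negbK => /eqP ->; rewrite Hf add0r big1 //.
  move=> j Aij; case: (boolP (x j 0 == 0)) => [/eqP ->|xj]; first exact: Hh.
  exfalso; move/bigcupP: nb; apply; exists j; first by rewrite inE.
  by rewrite inE.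
apply: leq_trans (subset_leq_card sub) _.
apply: leq_trans (leq_card_setU _ _) _.
rewrite mulnS leq_add2l; apply: leq_trans (card_bigcup_le _ _) _.
rewrite -sum_nat_const; apply: leq_sum => j _.
rewrite /maxOutdeg. exact: leq_bigmax.
Qed.

Lemma supp_traj (A : 'I_N -> 'I_N -> bool) (f : 'I_N -> R -> R)
    (h : 'I_N -> 'I_N -> R -> R -> R) (q : 'I_N) (e : R) t :
  (forall i, f i 0 = 0) -> (forall i j, h i j 0 0 = 0) ->
  (#|supp (traj A f h (pinch q e) t)| <= (maxOutdeg A).+1 ^ t)%N.
Proof.
move=> Hf Hh; elim: t => [|t IH].
  rewrite expn0 /traj /=; apply: leq_trans (_ : #|[set q]| <= 1)%N; last by rewrite cards1.
  apply: subset_leq_card; apply/subsetP => i; rewrite !inE mxE.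
  by case: ifP => //; rewrite eqxx.
have H := @supp_step A f h (traj A f h (pinch q e) t) Hf Hh.
apply: leq_trans H _.
by rewrite expnSr leq_mul2r IH orbT.
Qed.

End Graph.

Section LA.
Variable R : realType.

Lemma rowfree_tr M n (Ps : 'M[R]_(M, n)) : \rank Ps = n -> row_free Ps^T.
Proof. by move=> H; rewrite /row_free mxrank_tr H. Qed.

Lemma colfree_eq0 M n p (Ps : 'M[R]_(M, n)) (c : 'M[R]_(n, p)) :
  \rank Ps = n -> Ps *m c = 0 -> c = 0.
Proof.
move=> H Hc; have rf := rowfree_tr H.
have : c^T *m Ps^T == 0 by rewrite -trmx_mul Hc trmx0.
rewrite mulmx_free_eq0 // => /eqP H0.
by rewrite -(trmxK c) H0 trmx0.
Qed.

Lemma wwT0 M (w : 'rV[R]_M) : w *m w^T = 0 -> w = 0.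
Proof.
move=> H; have : (w *m w^T) 0 0 = 0 by rewrite H mxE.
rewrite mxE => /eqP; rewrite psumr_eq0 => [/allP H1|k _]; last first.
  by rewrite mxE -expr2 sqr_ge0.
apply/matrixP => i k; rewrite ord1 mxE; have := H1 k (mem_index_enum k).
by rewrite mxE -expr2 sqrf_eq0 => /eqP.
Qed.

Lemma gram_unit M n (Ps : 'M[R]_(M, n)) : \rank Ps = n -> (Ps^T *m Ps) \in unitmx.
Proof.
move=> H; have rf := rowfree_tr H.
rewrite -row_free_unit -kermx_eq0; apply/eqP/row_matrixP => i0; rewrite row0.
set v := row i0 _.
have vG : v *m (Ps^T *m Ps) = 0 by rewrite -row_mul mulmx_ker row0.
set w := v *m Ps^T.
have wP : w *m Ps = 0 by rewrite -mulmxA.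
have wT : w^T = Ps *m v^T by rewrite trmx_mul trmxK.
have : w *m w^T = 0 by rewrite wT mulmxA wP mul0mx.
move/wwT0 => /eqP; rewrite mulmx_free_eq0 //; by move/eqP.
Qed.


Lemma rip_mono N P (phi : 'M[R]_(P, N)) s d d' :
  RIP_holds phi s d -> d <= d' -> RIP_holds phi s d'.
Proof.
move=> H dd x hx; have [h1 h2] := H x hx; have := sqnorm_ge0 x => h0; split; nra.
Qed.

End LA.

Theorem mainTheorem5 (R : realType) (N : nat)
    (A : 'I_N -> 'I_N -> bool) (f : 'I_N -> R -> R)
    (h : 'I_N -> 'I_N -> R -> R -> R) (delta : R)
    (s : 'I_N -> nat) (psi : forall i : 'I_N, 'I_(s i) -> 'cV[R]_N -> R)
    (c : forall i : 'I_N, 'I_(s i) -> R)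
    (eps : 'I_N -> R) (P : nat) (phi : 'I_N -> 'M[R]_(P, N)) :
  (* no self-loops *)
  (forall i, A i i = false) ->
  (* Assumption 1 *)
  (forall i, f i 0 = 0) ->
  (* Assumption 2 *)
  0 < delta ->
  (forall i j, h i j 0 0 = 0) ->
  (forall i j (v : R), 0 < `|v| < delta -> h i j 0 v != 0) ->
  (* representation of the dynamics with nonzero coefficients *)
  (forall i l, c i l != 0) ->
  (forall (x0 : 'cV[R]_N) (t : nat) (i : 'I_N),
      traj A f h x0 t.+1 i 0 = \sum_(l < s i) c i l * psi i l (traj A f h x0 t)) ->
  let smax := (\max_(i < N) s i)%N in
  let xq := fun (q : 'I_N) (t : nat) => traj A f h (pinch q (eps q)) t in
  (* pinching initial conditions *)
  (forall q, 0 < `|eps q| < delta) ->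
  let Psi := fun i : 'I_N =>
    \matrix_(k < N * smax, l < s i)
       psi i l (xq (pair_of k).1 (nat_of_ord (pair_of k).2)) in
  (forall i, \rank (Psi i) = s i) ->
  (forall q, exists d : R,
      is_RIC (phi q) (2 * (maxOutdeg A).+1 ^ smax)%N d /\ d < Num.sqrt 2 - 1) ->
  let y := fun (q : 'I_N) (t : nat) => phi q *m xq q t in
  (* (a) unique l1 minimizer *)
  (forall (q : 'I_N) (t : nat), (1 <= t <= smax)%N ->
      phi q *m xq q t = y q t /\
      forall xt : 'cV[R]_N, phi q *m xt = y q t -> xt != xq q t ->
        l1norm (xq q t) < l1norm xt) /\
  (* (b) support recovers first-level sets *)
  (forall q : 'I_N, supp (xq q 1%N) :\ q = L1 A q) /\
  (* (c) coefficient recovery *)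
  (forall i : 'I_N,
     let b := \col_(k < N * smax)
                 xq (pair_of k).1 (nat_of_ord (pair_of k).2).+1 i 0 in
     let cv := \col_(l < s i) c i l in
     [/\ Psi i *m cv = b,
         forall c' : 'cV[R]_(s i), Psi i *m c' = b -> c' = cv,
         (Psi i)^T *m Psi i \in unitmx
       & cv = invmx ((Psi i)^T *m Psi i) *m (Psi i)^T *m b] /\
     (exists X, is_MP_pinv (Psi i) X) /\
     (forall X, is_MP_pinv (Psi i) X -> X *m b = cv)).

Proof.
move=> noloop Hf dpos Hh0 Hh Hc Hrep smax xq Heps Psi Hrank Hric y.
split; [|split].
- move=> q t /andP[t1 tle]; split => // xt Hxt Hne.
  have [d [[Hr _] dlt]] := Hric q.
  set K := ((maxOutdeg A).+1 ^ smax)%N.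
  have K0 : (0 < K)%N by rewrite expn_gt0.
  have [d'' [Hr' d0 dlt']] : exists d'',
      [/\ RIP_holds (phi q) (2 * K) d'', 0 <= d'' & d'' < Num.sqrt 2 - 1].
    case: (lerP 0 d) => dd; first by exists d.
    exists 0; split => //; first exact: rip_mono Hr (ltW dd).
    by rewrite subr_gt0 -{1}sqrtr1 ltr_sqrt // ltr1n.
  set x := xq q t.
  set T := supp x.
  have TK : (#|T| <= K)%N.
    apply: leq_trans (supp_traj A q (eps q) t Hf Hh0) _; exact: leq_pexp2l.
  pose hv := xt - x.
  have phih : phi q *m hv = 0 by rewrite mulmxBr Hxt /y subrr.
  have hn0 : hv != 0 by rewrite subr_eq0.
  have H := nsp K0 Hr' d0 dlt' TK phih hn0.
  have xt_eq : forall i, xt i 0 = x i 0 + hv i 0 by move=> i; rewrite /hv !mxE [x i 0 + _]addrC subrK.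
  rewrite /l1norm (bigID (fun i => i \in T)) [X in _ < X](bigID (fun i => i \in T)) /=.
  have E1 : \sum_(i | ~~ (i \in T)) `|x i 0| = 0.
    by rewrite big1 // => i; rewrite inE negbK => /eqP ->; rewrite normr0.
  have E2 : \sum_(i | ~~ (i \in T)) `|xt i 0| = \sum_(i in ~: T) `|hv i 0|.
    apply: eq_big => i; first by rewrite in_setC.
    by move=> iT; rewrite xt_eq; move: iT; rewrite inE negbK => /eqP ->; rewrite add0r.
  have E3 : \sum_(i in T) `|x i 0| - \sum_(i in T) `|hv i 0| <= \sum_(i in T) `|xt i 0|.
    rewrite -sumrB; apply: ler_sum => i _; rewrite xt_eq; exact: lerB_normD.
  rewrite E1 E2 addr0; lra.
- move=> q; apply/setP => i; rewrite !inE.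
  case: (eqVneq i q) => [->|iq] /=; first by rewrite noloop.
  rewrite /xq /traj /= !mxE (negbTE iq) Hf add0r.
  case: (boolP (A i q)) => Aiq.
    rewrite (bigD1 q) //= big1 ?addr0; last first.
      move=> j /andP[_ jq]; by rewrite !mxE (negbTE jq) Hh0.
    by rewrite mxE eqxx; apply: Hh; exact: Heps.
  rewrite big1 ?eqxx // => j Aij; rewrite !mxE.
  have jq : j != q by apply: contraNneq Aiq => <-.
  by rewrite (negbTE jq) Hh0.
- move=> i b cv.
  set Ps := Psi i.
  have Hb : Ps *m cv = b.
    apply/matrixP => k z; rewrite ord1 [in RHS]mxE Hrep mxE; apply: eq_bigr => l _.
    by rewrite !mxE mulrC.
  have U := gram_unit (Hrank i).
  have XP : forall X, Ps *m X *m Ps = Ps -> X *m Ps = 1%:M.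
    move=> X h1; apply/eqP; rewrite -subr_eq0; apply/eqP.
    apply: (colfree_eq0 (Hrank i)).
    by rewrite mulmxBr mulmx1 mulmxA h1 subrr.
  split; [split => //|split].
  + move=> c' Hc'; apply/eqP; rewrite -subr_eq0; apply/eqP.
    apply: (colfree_eq0 (Hrank i)); by rewrite mulmxBr Hc' Hb subrr.
  + by rewrite -Hb mulmxA -(mulmxA (invmx _)) mulVmx // mul1mx.
  + exists (invmx (Ps^T *m Ps) *m Ps^T).
    have XP1 : invmx (Ps^T *m Ps) *m Ps^T *m Ps = 1%:M by rewrite -mulmxA mulVmx.
    have GT : (Ps^T *m Ps)^T = Ps^T *m Ps by rewrite trmx_mul trmxK.
    split.
    * by rewrite -mulmxA XP1 mulmx1.
    * by rewrite XP1 mul1mx.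
    * by rewrite !trmx_mul trmxK trmx_inv GT !mulmxA.
    * by rewrite XP1 trmx1.
  + move=> X [h1 _ _ _]; by rewrite -Hb mulmxA XP // mul1mx.
Qed.
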